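(* An effect algebra $A$ satisfies the Riesz decomposition property if and only if the category of elements $\int R(A)$ is amalgamated.
   Context: An effect algebra is a partial algebra $(A;+,0,1)$, with a binary partial operation $+$ and constants $0,1$, satisfying: (E1) if $a+b$ is defined, then $b+a$ is defined and $a+b=b+a$; (E2) if $a+b$ and $(a+b)+c$ are defined, then $b+c$ and $a+(b+c)$ are defined and $(a+b)+c=a+(b+c)$; (E3) for every $a$ there is a unique $a^\perp$ such that $a+a^\perp=1$; (E4) if $a+1$ is defined, then $a=0$. One-element effect algebras are allowed. The order is given by $a\le b$ iff $a+c=b$ for some $c$. Morphisms of effect algebras preserve $1$ and defined sums; $\mathbf{EA}$ is the category of effect algebras. $A$ has the Riesz decomposition property if for all $u,v_1,v_2\in A$ with $u\le v_1+v_2$ there exist $u_1\le v_1$ and $u_2\le v_2$ with $u=u_1+u_2$. Boolean algebras are effect algebras via: $x+y$ is defined iff $x\wedge y=0$, and then $x+y=x\vee y$. For $[n]=\{1,\dots,n\}$, $\mathbf{FinBool}$ is the full subcategory of Boolean algebras on the objects $2^{[n]}$, $n\in\mathbb N$. The category $\int R(A)$ has: - objects: pairs $(2^{[n]},g)$ with $g\colon 2^{[n]}\to A$ an effect-algebra morphism; - arrows $(2^{[n]},g)\to(2^{[n']},g')$: Boolean algebra morphisms $f\colon 2^{[n]}\to 2^{[n']}$ with $g'\circ f=g$. A category is amalgamated if every span $X_1\leftarrow X\rightarrow X_2$ in it can be completed to a commutative square. *)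

(* Defs.v *)
From mathcomp Require Import all_boot.
Set Implicit Arguments. Unset Strict Implicit. Unset Printing Implicit Defensive.

Record EffectAlgebra := {
  ea_car :> Type;
  ea_sum : ea_car -> ea_car -> option ea_car;
  ea_zero : ea_car;
  ea_one : ea_car;
  ea_comm : forall a b, ea_sum a b = ea_sum b a;
  ea_assoc : forall a b c ab abc,
      ea_sum a b = Some ab -> ea_sum ab c = Some abc ->
      exists bc, ea_sum b c = Some bc /\ ea_sum a bc = Some abc;
  ea_orthosupp : forall a, exists! a', ea_sum a a' = Some ea_one;
  ea_zero_one : forall a s, ea_sum a ea_one = Some s -> a = ea_zero
}.

Definition ea_le (A : EffectAlgebra) (a b : A) : Prop :=
  exists c, ea_sum a c = Some b.

Definition riesz_decomposition (A : EffectAlgebra) : Prop :=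
  forall (u v1 v2 v12 : A), ea_sum v1 v2 = Some v12 -> ea_le u v12 ->
    exists u1 u2, ea_le u1 v1 /\ ea_le u2 v2 /\ ea_sum u1 u2 = Some u.

(* 2^[n] is represented by {set 'I_n}. The effect-algebra structure:
   x + y defined iff x :&: y = set0, then equal to x :|: y. *)
Definition is_ea_morph_from_pow (A : EffectAlgebra) (n : nat)
    (g : {set 'I_n} -> A) : Prop :=
  g setT = ea_one A /\
  forall x y : {set 'I_n}, x :&: y = set0 -> ea_sum (g x) (g y) = Some (g (x :|: y)).

Definition is_ba_morph (n m : nat) (f : {set 'I_n} -> {set 'I_m}) : Prop :=
  f set0 = set0 /\ f setT = setT /\
  (forall x y, f (x :|: y) = f x :|: f y) /\
  (forall x y, f (x :&: y) = f x :&: f y) /\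
  (forall x, f (~: x) = ~: f x).

Record intR_obj (A : EffectAlgebra) := IntRObj {
  ob_n : nat;
  ob_g : {set 'I_ob_n} -> A;
  ob_g_morph : is_ea_morph_from_pow ob_g
}.

Record intR_hom (A : EffectAlgebra) (X Y : intR_obj A) := IntRHom {
  hom_f : {set 'I_(ob_n X)} -> {set 'I_(ob_n Y)};
  hom_ba : is_ba_morph hom_f;
  hom_comm : forall x, @ob_g A Y (hom_f x) = @ob_g A X x
}.

(* The category \int R(A) is amalgamated: every span completes to a
   commutative square (arrows are equal iff their underlying maps are). *)
Definition intR_amalgamated (A : EffectAlgebra) : Prop :=
  forall (X X1 X2 : intR_obj A) (f1 : intR_hom X X1) (f2 : intR_hom X X2),
    exists (Y : intR_obj A) (h1 : intR_hom X1 Y) (h2 : intR_hom X2 Y),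
      forall x, hom_f h1 (hom_f f1 x) = hom_f h2 (hom_f f2 x).

(* Main.v *)
From Stdlib Require Import IndefiniteDescription.
Require Import Defs.
From HB Require Import structures.
From mathcomp Require Import all_boot.
Set Implicit Arguments. Unset Strict Implicit. Unset Printing Implicit Defensive.

Section Basics.
Variable A : EffectAlgebra.
Local Notation sum := (@ea_sum A).
Local Notation z := (ea_zero A).
Local Notation one := (ea_one A).

Lemma assocL (a b c bc abc : A) : sum b c = Some bc -> sum a bc = Some abc ->
  exists ab, sum a b = Some ab /\ sum ab c = Some abc.
Proof.
move=> Hbc Habc; rewrite ea_comm in Hbc; rewrite ea_comm in Habc.
have [ba [Hba Hc]] := ea_assoc Hbc Habc.
by exists ba; split; rewrite ea_comm.
Qed.

Lemma uniq_perp (a b c : A) : sum a b = Some one -> sum a c = Some one -> b = c.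
Proof.
move=> Hb Hc; have [a' [_ U]] := ea_orthosupp a.
by rewrite -(U b Hb) (U c Hc).
Qed.

Lemma one_zero : sum one z = Some one.
Proof.
have [o [Ho _]] := ea_orthosupp one.
have Ho' : sum o one = Some one by rewrite ea_comm.
by rewrite -(ea_zero_one Ho').
Qed.

Lemma perp_zero (x y : A) : sum x y = Some one -> sum y z = Some y.
Proof.
move=> Hxy; have [bc [H1 H2]] := ea_assoc Hxy one_zero.
by rewrite H1 (uniq_perp H2 Hxy).
Qed.

Lemma add0 (a : A) : sum a z = Some a.
Proof.
have [a' [Ha _]] := ea_orthosupp a.
apply: (@perp_zero a'); by rewrite ea_comm.
Qed.

Lemma add0l (a : A) : sum z a = Some a.
Proof. by rewrite ea_comm add0. Qed.

Lemma cancel (a b c s : A) : sum a b = Some s -> sum a c = Some s -> b = c.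
Proof.
move=> Hb Hc; have [s' [Hs _]] := ea_orthosupp s.
have [e1 [H1 H1']] := ea_assoc Hb Hs.
have [e2 [H2 H2']] := ea_assoc Hc Hs.
have E := uniq_perp H1' H2'; subst e2.
have [e' [He _]] := ea_orthosupp e1.
have [f [F1 F1']] := ea_assoc H1 He.
have [f' [F2 F2']] := ea_assoc H2 He.
rewrite F1 in F2; case: F2 => ?; subst f'.
rewrite ea_comm in F1'; rewrite ea_comm in F2'.
exact: uniq_perp F1' F2'.
Qed.

Lemma positive (a b : A) : sum a b = Some z -> a = z.
Proof.
move=> H.
have Hz1 : sum z one = Some one by rewrite ea_comm one_zero.
have [bc [H1 _]] := ea_assoc H Hz1.
have Hb := ea_zero_one H1; subst b.
by move: H; rewrite add0 => -[].
Qed.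

Definition oadd (x y : option A) : option A :=
  match x, y with Some a, Some b => sum a b | _, _ => None end.

Lemma oaddA : associative oadd.
Proof.
move=> [a|] [b|] [c|] //=.
- case Hbc: (sum b c) => [bc|]; case Hab: (sum a b) => [ab|] /=.
  + case Habc: (sum ab c) => [abc|].
      have [bc' [E1 E2]] := ea_assoc Hab Habc.
      by rewrite Hbc in E1; case: E1 => ?; subst bc'; rewrite E2.
    case E: (sum a bc) => [abc|] //.
    have [ab' [E1 E2]] := assocL Hbc E.
    by rewrite Hab in E1; case: E1 => ?; subst ab'; rewrite Habc in E2.
  + case E: (sum a bc) => [abc|] //.
    by have [ab' [E1 E2]] := assocL Hbc E; rewrite Hab in E1.
  + case Habc: (sum ab c) => [abc|] //.
    by have [bc' [E1 E2]] := ea_assoc Hab Habc; rewrite Hbc in E1.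
  + by [].
- by case: (sum a b).
Qed.

Lemma oaddC : commutative oadd.
Proof. by move=> [a|] [b|] //=; rewrite ea_comm. Qed.

Lemma oadd0 : left_id (Some z) oadd.
Proof. by move=> [a|] //=; rewrite add0l. Qed.

End Basics.

HB.instance Definition _ (A : EffectAlgebra) :=
  Monoid.isComLaw.Build (option A) (Some (ea_zero A)) (@oadd A) (@oaddA A) (@oaddC A) (@oadd0 A).
Section Sums.
Variable A : EffectAlgebra.
Local Notation sum := (@ea_sum A).
Local Notation z := (ea_zero A).
Local Notation one := (ea_one A).
Local Notation "\osum_ ( i 'in' S ) F" := (\big[@oadd A/Some z]_(i in S) Some F)
  (at level 41, F at level 41, i, S at level 50).

Lemma oadd_some (x y : option A) s : oadd x y = Some s ->
  exists a b, x = Some a /\ y = Some b /\ sum a b = Some s.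
Proof. by case: x => [a|] //; case: y => [b|] // H; exists a, b. Qed.

Lemma decomp (R : riesz_decomposition A) (J : finType) : forall k (C : {set J}) (b : J -> A) u t,
  #|C| = k -> ea_le u t -> \osum_(i in C) (b i) = Some t ->
  exists u' : J -> A, \osum_(i in C) (u' i) = Some u /\ forall i, i \in C -> ea_le (u' i) (b i).
Proof.
elim=> [|k IH] C b u t Hk Hle.
  move/cards0_eq: Hk => ->; rewrite big_set0 => -[Ht]; subst t.
  case: Hle => c Hc; have Hu := positive Hc; subst u.
  by exists (fun _ => z); rewrite big_set0; split => // i; rewrite in_set0.
have /card_gt0P [k0 Hk0] : 0 < #|C| by rewrite Hk.
rewrite (big_setD1 _ Hk0) => /oadd_some [a [t' [[<-] [Ht' Hs]]]].
have [u1 [u2 [le1 [le2 Hu]]]] := R u (b k0) t' t Hs Hle.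
have Hc' : #|C :\ k0| = k by move: Hk; rewrite (cardsD1 k0) Hk0 add1n => -[].
have [u'' [Hsum Hle']] := IH _ b u2 t' Hc' le2 Ht'.
exists (fun i => if i == k0 then u1 else u'' i); split.
  rewrite (big_setD1 _ Hk0) eqxx (eq_bigr (fun i => Some (u'' i))) ?Hsum //.
  by move=> i; rewrite in_setD1 => /andP[/negPf -> _].
move=> i Hi; case: ifP => [/eqP -> // | /negbT Hne].
by apply: Hle'; rewrite in_setD1 Hne.
Qed.

Lemma refine (R : riesz_decomposition A) (I J : finType) : forall k (Rw : {set I}) (C : {set J})
  (a : I -> A) (b : J -> A) s, #|Rw| = k ->
  \osum_(i in Rw) (a i) = Some s -> \osum_(j in C) (b j) = Some s ->
  exists D : I -> J -> A, (forall i, i \in Rw -> \osum_(j in C) (D i j) = Some (a i)) /\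
                          (forall j, j \in C -> \osum_(i in Rw) (D i j) = Some (b j)).
Proof.
elim=> [|k IH] Rw C a b s Hk.
  move/cards0_eq: Hk => ->; rewrite big_set0 => -[Hs]; subst s => Hb.
  exists (fun _ _ => z); split => [i|j Hj]; first by rewrite in_set0.
  rewrite big_set0; move: Hb; rewrite (big_setD1 _ Hj) => /oadd_some [x [y [[<-] [_ H]]]].
  by rewrite (positive H).
have /card_gt0P [i0 Hi0] : 0 < #|Rw| by rewrite Hk.
rewrite (big_setD1 _ Hi0) => /oadd_some [a0 [s' [[Ha0] [Hs' Hs]]]] Hb.
have [u' [Hu' Hle]] := decomp R (erefl #|C|) (ex_intro _ s' Hs) Hb.
have [b' Hb'] : exists b' : J -> A, forall j, j \in C -> sum (u' j) (b' j) = Some (b j).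
  have H : forall j, exists c, j \in C -> sum (u' j) c = Some (b j).
    move=> j; case: (boolP (j \in C)) => Hj; last by exists z.
    by have [c Hc] := Hle j Hj; exists c.
  have [f Hf] := functional_choice _ H; by exists f.
have Hsplit : \osum_(j in C) (b j) = oadd (\osum_(j in C) (u' j)) (\osum_(j in C) (b' j)).
  rewrite -big_split; apply: eq_bigr => j Hj /=; by rewrite Hb'.
rewrite Hsplit Hu' in Hb.
move: Hb => /oadd_some [x [s'' [[<-] [Hs'' Hs2]]]].
have E := cancel Hs2 Hs; subst s''.
have Hc' : #|Rw :\ i0| = k by move: Hk; rewrite (cardsD1 i0) Hi0 add1n => -[].
have [D' [HD1 HD2]] := IH _ C a b' s' Hc' Hs' Hs''.
exists (fun i => if i == i0 then u' else D' i); split.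
  move=> i Hi; case: ifP => [/eqP -> | /negbT Hne]; first by rewrite Hu' Ha0.
  by apply: HD1; rewrite in_setD1 Hne.
move=> j Hj; rewrite (big_setD1 _ Hi0) eqxx (eq_bigr (fun i => Some (D' i j))).
  by rewrite HD2 //= Hb'.
by move=> i; rewrite in_setD1 => /andP[/negPf -> _].
Qed.
End Sums.
Section Morph.
Variable A : EffectAlgebra.
Local Notation sum := (@ea_sum A).
Local Notation z := (ea_zero A).
Local Notation one := (ea_one A).
Local Notation "\osum_ ( i 'in' S ) F" := (\big[@oadd A/Some z]_(i in S) Some F)
  (at level 41, F at level 41, i, S at level 50).

Lemma gzero n (g : {set 'I_n} -> A) : is_ea_morph_from_pow g -> g set0 = z.
Proof.
move=> [_ H]; have := H set0 set0 (setI0 _); rewrite setU0 => E.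
by apply/esym; apply: (@cancel _ (g set0) z (g set0) (g set0)); rewrite ?add0.
Qed.

Lemma gatoms n (g : {set 'I_n} -> A) : is_ea_morph_from_pow g ->
  forall S, Some (g S) = \osum_(i in S) (g [set i]).
Proof.
move=> Hg; have [_ H] := Hg.
suff: forall k (S : {set 'I_n}), #|S| = k -> Some (g S) = \osum_(i in S) (g [set i]) by move=> K S; exact: K.
elim=> [|k IH] S Hk.
  by move/cards0_eq: Hk => ->; rewrite big_set0 (gzero Hg).
have /card_gt0P [i Hi] : 0 < #|S| by rewrite Hk.
have Hc' : #|S :\ i| = k by move: Hk; rewrite (cardsD1 i) Hi add1n => -[].
rewrite (big_setD1 _ Hi) -IH //= H; last first.
  by apply/setP => x; rewrite !inE; case: (x == i); rewrite ?andbF.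
by rewrite setD1K.
Qed.

Lemma gle n (g : {set 'I_n} -> A) : is_ea_morph_from_pow g ->
  forall x y : {set 'I_n}, x \subset y -> ea_le (g x) (g y).
Proof.
move=> [_ H] x y Hxy; exists (g (y :\: x)); rewrite H.
  congr (Some (g _)); apply/setP => t; rewrite !inE.
  by case Ht: (t \in x) => //=; rewrite (subsetP Hxy t Ht).
by apply/setP => t; rewrite !inE; case: (t \in x); rewrite ?andbF.
Qed.

Definition wsum n (w : 'I_n -> A) (S : {set 'I_n}) := \osum_(i in S) (w i).
Definition wfun n (w : 'I_n -> A) S := odflt z (wsum w S).

Lemma wsumE n (w : 'I_n -> A) : wsum w setT = Some one -> forall S, wsum w S = Some (wfun w S).
Proof.
move=> H S; move: H; rewrite /wsum (big_setID S) setTI => /oadd_some [a [b [Ha _]]].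
by rewrite /wfun /wsum Ha.
Qed.

Lemma wmorph n (w : 'I_n -> A) (H : wsum w setT = Some one) : is_ea_morph_from_pow (wfun w).
Proof.
split; first by rewrite /wfun H.
move=> x y Hxy.
have E : wsum w (x :|: y) = oadd (wsum w x) (wsum w y).
  rewrite /wsum (big_setID x); congr oadd; apply: eq_bigl => i; rewrite !inE.
    by case: (i \in x); rewrite ?orbT ?andbF.
  have : i \in x :&: y = false by rewrite Hxy in_set0.
  by rewrite inE; case: (i \in x); case: (i \in y).
by move: E; rewrite !(wsumE H) /=.
Qed.

Definition mkObj n (w : 'I_n -> A) (H : wsum w setT = Some one) : intR_obj A :=
  @IntRObj A n (wfun w) (wmorph H).

Definition pre m n (q : 'I_m -> 'I_n) (x : {set 'I_n}) : {set 'I_m} := [set t | q t \in x].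

Lemma pre_ba m n (q : 'I_m -> 'I_n) : is_ba_morph (pre q).
Proof.
rewrite /is_ba_morph /pre; split; [|split; [|split; [|split]]] => *;
  by apply/setP => t; rewrite !inE.
Qed.

Lemma bmono n m (f : {set 'I_n} -> {set 'I_m}) : is_ba_morph f ->
  forall x y : {set 'I_n}, x \subset y -> f x \subset f y.
Proof.
move=> [_ [_ [fU _]]] x y /setUidPr Hxy.
by apply/setUidPr; rewrite -fU Hxy.
Qed.

Lemma bmem n m (f : {set 'I_n} -> {set 'I_m}) : is_ba_morph f ->
  forall (x : {set 'I_n}) (j : 'I_m), (j \in f x) = [exists i, (i \in x) && (j \in f [set i])].
Proof.
move=> [f0 [_ [fU _]]] x j.
have Ex : x = \bigcup_(i in x) [set i].
  apply/setP => i; apply/idP/bigcupP => [Hi|[i' Hi']]; first by exists i; rewrite ?inE.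
  by rewrite inE => /eqP ->.
rewrite {1}Ex (big_morph f fU f0).
apply/bigcupP/existsP => [[i Hi Hj]|[i /andP[Hi Hj]]].
  by exists i; rewrite Hi Hj.
by exists i.
Qed.

Lemma bdisj n m (f : {set 'I_n} -> {set 'I_m}) : is_ba_morph f ->
  forall (i i' : 'I_n) (j : 'I_m), j \in f [set i] -> j \in f [set i'] -> i = i'.
Proof.
move=> [f0 [_ [_ [fI _]]]] i i' j H1 H2; apply/eqP; apply/negPn/negP => Hne.
have : j \in f ([set i] :&: [set i']) by rewrite fI inE H1 H2.
have -> : [set i] :&: [set i'] = set0.
  by apply/setP => t; rewrite !inE; case: eqP => // ->; rewrite (negPf Hne).
by rewrite f0 in_set0.
Qed.

Lemma bcover n m (f : {set 'I_n} -> {set 'I_m}) : is_ba_morph f ->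
  forall j : 'I_m, exists i, j \in f [set i].
Proof.
move=> Hf j; have := Hf; move=> [_ [fT _]].
have : j \in f setT by rewrite fT inE.
by rewrite (bmem Hf) => /existsP [i /andP[_ Hi]]; exists i.
Qed.
End Morph.
Section Dir1.
Variable A : EffectAlgebra.
Local Notation sum := (@ea_sum A).
Local Notation z := (ea_zero A).
Local Notation one := (ea_one A).
Local Notation "\osum_ ( i 'in' S ) F" := (\big[@oadd A/Some z]_(i in S) Some F)
  (at level 41, F at level 41, i, S at level 50).

Lemma dir1 : riesz_decomposition A -> intR_amalgamated A.
Proof.
move=> R [n g Hg] [n1 g1 Hg1] [n2 g2 Hg2] [F1 HF1 HC1] [F2 HF2 HC2] /=.
simpl in *.
have Hblk : forall i, exists D : 'I_n1 -> 'I_n2 -> A,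
  (forall j, j \in F1 [set i] -> \osum_(k in F2 [set i]) (D j k) = Some (g1 [set j])) /\
  (forall k, k \in F2 [set i] -> \osum_(j in F1 [set i]) (D j k) = Some (g2 [set k])).
  move=> i; apply: (refine R (erefl _) (s := g [set i])).
  - by rewrite -(gatoms Hg1) HC1.
  - by rewrite -(gatoms Hg2) HC2.
have [DD HDD] := functional_choice _ Hblk.
pose cp (p : 'I_n1 * 'I_n2) := [forall i, (p.1 \in F1 [set i]) == (p.2 \in F2 [set i])].
have Hcp1 : forall i j k, j \in F1 [set i] -> cp (j, k) = (k \in F2 [set i]).
  move=> i j k Hj; apply/forallP/idP => [/(_ i) /= | Hk i'].
    by rewrite Hj => /eqP <-.
  rewrite /=; case: (eqVneq i' i) => [-> | Hne]; first by rewrite Hj Hk.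
  case Hj': (j \in F1 [set i']); first by move: Hne; rewrite (bdisj HF1 Hj Hj') eqxx.
  case Hk': (k \in F2 [set i']) => //.
  by move: Hne; rewrite (bdisj HF2 Hk Hk') eqxx.
have Hcp2 : forall i j k, k \in F2 [set i] -> cp (j, k) = (j \in F1 [set i]).
  move=> i j k Hk; apply/forallP/idP => [/(_ i) /= | Hj i'].
    by rewrite Hk => /eqP ->.
  rewrite /=; case: (eqVneq i' i) => [-> | Hne]; first by rewrite Hj Hk.
  case Hj': (j \in F1 [set i']); first by move: Hne; rewrite (bdisj HF1 Hj Hj') eqxx.
  case Hk': (k \in F2 [set i']) => //.
  by move: Hne; rewrite (bdisj HF2 Hk Hk') eqxx.
pose d j k := if [pick i | j \in F1 [set i]] is Some i then DD i j k else z.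
have Hd : forall i j k, j \in F1 [set i] -> d j k = DD i j k.
  move=> i j k Hj; rewrite /d; case: pickP => [i' Hi' | H]; first by rewrite (bdisj HF1 Hi' Hj).
  by move: (H i); rewrite Hj.
have Hrow : forall j, \big[@oadd A/Some z]_(k | cp (j, k)) Some (d j k) = Some (g1 [set j]).
  move=> j; have [i Hj] := bcover HF1 j.
  rewrite (eq_bigl (fun k => k \in F2 [set i])); last by move=> k; rewrite (Hcp1 i).
  rewrite (eq_bigr (fun k => Some (DD i j k))); last by move=> k _; rewrite (Hd i).
  by apply: (proj1 (HDD i)).
have Hcol : forall k, \big[@oadd A/Some z]_(j | cp (j, k)) Some (d j k) = Some (g2 [set k]).
  move=> k; have [i Hk] := bcover HF2 k.
  rewrite (eq_bigl (fun j => j \in F1 [set i])); last by move=> j; rewrite (Hcp2 i).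
  rewrite (eq_bigr (fun j => Some (DD i j k))); last by move=> j Hj; rewrite (Hd i).
  by apply: (proj2 (HDD i)).
pose S := [set p | cp p].
pose ev (t : 'I_#|S|) : 'I_n1 * 'I_n2 := enum_val t.
pose w (t : 'I_#|S|) := d (ev t).1 (ev t).2.
pose q1 (t : 'I_#|S|) := (ev t).1.
pose q2 (t : 'I_#|S|) := (ev t).2.
have L1 : forall x, wsum w (pre q1 x) = Some (g1 x).
  move=> x; rewrite /wsum (gatoms Hg1 x).
  rewrite -(eq_bigr _ (fun j _ => Hrow j)) pair_big_dep.
  rewrite (eq_bigl (fun t => (ev t).1 \in x)); last by move=> t; rewrite inE.
  have -> : \big[@oadd A/Some z]_(t < #|S| | (ev t).1 \in x) Some (w t) =
            \big[@oadd A/Some z]_(p in S | p.1 \in x) Some (d p.1 p.2)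
    by rewrite big_enum_val_cond.
  by apply: eq_bigl => -[j k]; rewrite inE andbC.
have L2 : forall y, wsum w (pre q2 y) = Some (g2 y).
  move=> y; rewrite /wsum (gatoms Hg2 y).
  rewrite -(eq_bigr _ (fun k _ => Hcol k)) (exchange_big_dep predT) // pair_big_dep.
  rewrite (eq_bigl (fun t => (ev t).2 \in y)); last by move=> t; rewrite inE.
  have -> : \big[@oadd A/Some z]_(t < #|S| | (ev t).2 \in y) Some (w t) =
            \big[@oadd A/Some z]_(p in S | p.2 \in y) Some (d p.1 p.2)
    by rewrite big_enum_val_cond.
  by apply: eq_bigl => -[j k]; rewrite inE /= andbC.
have Htot : wsum w setT = Some one.
  have -> : [set: 'I_#|S|] = pre q1 setT by apply/setP => t; rewrite !inE.
  by rewrite L1 (proj1 Hg1).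
pose Y := mkObj Htot.
have hc1 : forall x : {set 'I_n1}, @ob_g A Y (pre q1 x) = @ob_g A (IntRObj Hg1) x.
  by move=> x; rewrite /= /wfun L1.
have hc2 : forall x : {set 'I_n2}, @ob_g A Y (pre q2 x) = @ob_g A (IntRObj Hg2) x.
  by move=> x; rewrite /= /wfun L2.
exists Y, (@IntRHom A (IntRObj Hg1) Y (pre q1) (pre_ba q1) hc1), (@IntRHom A (IntRObj Hg2) Y (pre q2) (pre_ba q2) hc2) => x /=.
apply/setP => t; rewrite !inE.
have Ht : cp (ev t) by have := enum_valP t; rewrite inE.
rewrite /q1 /q2 (bmem HF1) (bmem HF2); apply: eq_existsb => i.
by move/forallP: Ht => /(_ i) /eqP ->.
Qed.
End Dir1.
Section Dir2.
Variable A : EffectAlgebra.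
Local Notation sum := (@ea_sum A).
Local Notation z := (ea_zero A).
Local Notation one := (ea_one A).

Lemma pre_comm m n (w1 : 'I_m -> A) (w : 'I_n -> A) (p : 'I_m -> 'I_n) :
  (forall i, \big[@oadd A/Some z]_(j | p j == i) Some (w1 j) = Some (w i)) ->
  forall x, wsum w1 (pre p x) = wsum w x.
Proof.
move=> H x; rewrite /wsum (eq_bigl (fun j => p j \in x)); last by move=> j; rewrite inE.
rewrite (partition_big p (fun i => i \in x)) //.
apply: eq_bigr => i Hi; rewrite -H; apply: eq_bigl => j.
by case: eqP => [-> | _]; rewrite ?Hi ?andbF.
Qed.

Lemma wsum1 n (w : 'I_n -> A) j : wfun w [set j] = w j.
Proof. by rewrite /wfun /wsum big_set1. Qed.

Lemma wsumT n (w : 'I_n -> A) : wsum w setT = \big[@oadd A/Some z]_(i < n) Some (w i).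
Proof. by rewrite /wsum; apply: eq_bigl => i; rewrite inE. Qed.

Lemma dir2 : intR_amalgamated A -> riesz_decomposition A.
Proof.
move=> Am u v1 v2 v12 H12 [w Huw].
have [c [Hc _]] := ea_orthosupp v12.
have [e [He1 He2]] := ea_assoc H12 Hc.
have [e' [He1' He2']] := ea_assoc Huw Hc.
pose w0 (i : 'I_2) := if val i == 0 then v12 else c.
pose wa (j : 'I_3) := if val j == 0 then v1 else if val j == 1 then v2 else c.
pose wb (j : 'I_3) := if val j == 0 then u else if val j == 1 then w else c.
pose p (j : 'I_3) : 'I_2 := if val j == 2 then ord_max else ord0.
have H0 : wsum w0 setT = Some one.
  by rewrite wsumT !big_ord_recl big_ord0 /w0 /= add0 Hc.
have Ha : wsum wa setT = Some one.
  by rewrite wsumT !big_ord_recl big_ord0 /wa /= add0 He1 He2.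
have Hb : wsum wb setT = Some one.
  by rewrite wsumT !big_ord_recl big_ord0 /wb /= add0 He1' He2'.
have Fa : forall i, \big[@oadd A/Some z]_(j | p j == i) Some (wa j) = Some (w0 i).
  move=> i; rewrite big_mkcond !big_ord_recl big_ord0 /p /wa /w0 /=.
  case: i => [[|[|k]] Hk] //=; first by rewrite !add0 H12.
  by rewrite add0 !add0l.
have Fb : forall i, \big[@oadd A/Some z]_(j | p j == i) Some (wb j) = Some (w0 i).
  move=> i; rewrite big_mkcond !big_ord_recl big_ord0 /p /wb /w0 /=.
  case: i => [[|[|k]] Hk] //=; first by rewrite !add0 Huw.
  by rewrite add0 !add0l.
pose X := mkObj H0. pose X1 := mkObj Ha. pose X2 := mkObj Hb.
have hc1 : forall x, @ob_g A X1 (pre p x) = @ob_g A X x.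
  by move=> x; rewrite /= /wfun (pre_comm Fa).
have hc2 : forall x, @ob_g A X2 (pre p x) = @ob_g A X x.
  by move=> x; rewrite /= /wfun (pre_comm Fb).
have [Y [h1 [h2 Hsq]]] := Am X X1 X2 (@IntRHom A X X1 (pre p) (pre_ba p) hc1)
                                  (@IntRHom A X X2 (pre p) (pre_ba p) hc2).
simpl in Hsq.
case: Y h1 h2 Hsq => m gY HgY [k1 Hk1 Hc1] [k2 Hk2 Hc2] /= Hsq.
simpl in *.
pose j0 : 'I_3 := ord0. pose j1 : 'I_3 := @Ordinal 3 1 isT.
pose U := k2 [set j0]. pose V1 := k1 [set j0]. pose V2 := k1 [set j1].
have gU : gY U = u by rewrite /U Hc2 wsum1.
have gV1 : gY V1 = v1 by rewrite /V1 Hc1 wsum1.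
have gV2 : gY V2 = v2 by rewrite /V2 Hc1 wsum1.
have D12 : V1 :&: V2 = set0.
  have [f0 [_ [_ [fI _]]]] := Hk1.
  rewrite /V1 /V2 -fI -f0; congr k1.
  by apply/setP => t; rewrite !inE; case: eqP => // ->.
have Pre0 : pre p [set ord0] = [set j0] :|: [set j1].
  by apply/setP => -[[|[|[|t]]] Ht]; rewrite !inE.
have Ucov : U \subset V1 :|: V2.
  have [_ [_ [fU _]]] := Hk1.
  rewrite /V1 /V2 -fU -Pre0 Hsq /U; apply: (bmono Hk2).
  by apply/subsetP => t; rewrite !inE => /eqP ->.
exists (gY (U :&: V1)), (gY (U :&: V2)); split; [|split].
- by rewrite -gV1; apply: (gle HgY); apply: subsetIr.
- by rewrite -gV2; apply: (gle HgY); apply: subsetIr.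
rewrite (proj2 HgY); last first.
  apply/setP => t; rewrite !inE.
  have : t \in V1 :&: V2 = false by rewrite D12 inE.
  by rewrite inE; case: (t \in U); case: (t \in V1); case: (t \in V2).
by rewrite -setIUr (setIidPl Ucov) gU.
Qed.
End Dir2.

Theorem mainTheorem2 (A : EffectAlgebra) :
  riesz_decomposition A <-> intR_amalgamated A.
Proof. split; [exact: dir1 | exact: dir2]. Qed.
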